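(* Let $T>0$, $I=[0,T]$, $\nu_1,\nu_2\in\mathbb{R}$, $p>1$. Let $\Phi:\mathbb{R}\to\mathbb{R}$ be a strictly increasing homeomorphism; let $A:W^{1,p}(I)\to C(I,\mathbb{R})$, $x\mapsto A_x$, be continuous w.r.t. the uniform topology, with $h_1,h_2\in C(I,\mathbb{R})$, $h_1,h_2\ge0$, $1/h_1,1/h_2\in L^p(I)$ and $h_1\le A_x\le h_2$ on $I$ for all $x\in W^{1,p}(I)$; let $F:W^{1,p}(I)\to L^1(I)$ be continuous with $|F_x(t)|\le\psi(t)$ for all $x$ and a.e. $t$, for some non-negative $\psi\in L^1(I)$. Let $\mathcal{P}:W^{1,p}(I)\to W^{1,p}(I)$ be the operator defined in the context. Then there exists a constant $\mathbf{c}_1>0$ such that $\|\mathcal{P}_x\|_{W^{1,p}}\le\mathbf{c}_1$ for every $x\in W^{1,p}(I)$.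
   Context: $\mathcal{F}_x(t):=\int_0^tF_x(s)\,ds$. For $x\in W^{1,p}(I)$, $\xi_x$ is the unique real number with $\int_0^T\frac{1}{A_x(t)}\Phi^{-1}(\xi_x+\mathcal{F}_x(t))\,dt=\nu_2-\nu_1$ (it exists and is unique under these hypotheses). $\mathcal{P}_x(t):=\nu_1+\int_0^t\frac{1}{A_x(s)}\Phi^{-1}(\xi_x+\mathcal{F}_x(s))\,ds$. $\|u\|_{W^{1,p}}:=\|u\|_{L^p}+\|u'\|_{L^p}$. *)

(* Defs.v *)
From HB Require Import structures.
From mathcomp Require Import all_boot all_order all_algebra.
From mathcomp Require Import all_classical all_reals all_analysis.
Set Implicit Arguments. Unset Strict Implicit. Unset Printing Implicit Defensive.
Import Order.TTheory GRing.Theory Num.Theory.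
Import numFieldNormedType.Exports.
Local Open Scope classical_set_scope.
Local Open Scope ring_scope.

Section Sobolev.
Variable R : realType.
Local Notation mu := (@lebesgue_measure R).

Definition Itv (T : R) : set R := `[0, T].

Definition inLp (p T : R) (f : R -> R) : Prop :=
  measurable_fun (Itv T) f /\
  (\int[mu]_(t in Itv T) ((`|f t| `^ p)%:E) < +oo)%E.

Definition Lpnorm (p T : R) (f : R -> R) : R :=
  (Rintegral mu (Itv T) (fun t => `|f t| `^ p)) `^ p^-1.

Definition inL1 (T : R) (f : R -> R) : Prop :=
  mu.-integrable (Itv T) (EFin \o f).

Definition weak_deriv (p T : R) (x g : R -> R) : Prop :=
  inLp p T x /\ inLp p T g /\
  forall t, t \in Itv T -> x t = x 0 + Rintegral mu `[0, t] g.

Definition inW1p (p T : R) (x : R -> R) : Prop := exists g, weak_deriv p T x g.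

(* the (a.e. unique) weak derivative, chosen *)
Definition wderiv (p T : R) (x : R -> R) : R -> R :=
  xget (fun _ => 0) [set g | weak_deriv p T x g].

Definition W1pnorm (p T : R) (x : R -> R) : R :=
  Lpnorm p T x + Lpnorm p T (wderiv p T x).

(* 1/h in L^p(I), with 1/h understood as +oo where h = 0:
   h vanishes only on a null subset of I and t |-> 1/h(t) is in L^p(I) *)
Definition inv_inLp (p T : R) (h : R -> R) : Prop :=
  mu (Itv T `&` [set t | h t = 0]) = 0%E /\ inLp p T (fun t => (h t)^-1).

Definition calF (F : (R -> R) -> R -> R) (x : R -> R) (t : R) : R :=
  Rintegral mu `[0, t] (F x).

Definition xi (T nu1 nu2 : R) (Phiinv : R -> R) (A F : (R -> R) -> R -> R)
    (x : R -> R) : R :=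
  xget 0 [set c : R | Rintegral mu (Itv T)
            (fun t => (A x t)^-1 * Phiinv (c + calF F x t)) = nu2 - nu1].

Definition calP (T nu1 nu2 : R) (Phiinv : R -> R) (A F : (R -> R) -> R -> R)
    (x : R -> R) (t : R) : R :=
  nu1 + Rintegral mu `[0, t]
    (fun s => (A x s)^-1 * Phiinv (xi T nu1 nu2 Phiinv A F x + calF F x s)).

End Sobolev.

(* Main.v *)
Require Import Defs.
From HB Require Import structures.
From mathcomp Require Import all_boot all_order all_algebra.
From mathcomp Require Import all_classical all_reals all_analysis.
Import Order.TTheory GRing.Theory Num.Theory.
Import numFieldNormedType.Exports.
Local Open Scope classical_set_scope.
Local Open Scope ring_scope.

From mathcomp Require Import measurable_realfun ring lra.

Section S.
Context {R : realType}.
Local Notation mu := (@lebesgue_measure R).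

Lemma le_1powR (p y : R) : 1 <= p -> 0 <= y -> y <= 1 + y `^ p.
Proof.
move=> p1 y0; have [y1|y1] := leP y 1.
  by rewrite (le_trans y1)// lerDl powR_ge0.
apply: (@le_trans _ _ (y `^ p)); last by rewrite lerDr.
by rewrite -{1}(powRr1 y0) ler_powR// ltW.
Qed.

Lemma cst_int (a b k : R) : mu.-integrable (`[a, b] : set R) (EFin \o cst k).
Proof.
apply: (@measurable_bounded_integrable _ _ R mu) => //.
  have := lebesgue_measure_itv `[a, b]%R; rewrite /= => ->.
  by case: ifPn => // _; rewrite -EFinB ltry.
exact: bounded_cst.
Qed.


Local Notation LR := (measurableTypeR R).

Lemma mItv (T : R) : measurable (Itv T : set LR).
Proof. exact: measurable_itv. Qed.

Lemma mcc (a b : R) : measurable (`[a, b] : set LR).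
Proof. exact: measurable_itv. Qed.

Lemma mconv (D : set R) (f : R -> R) :
  measurable_fun D f -> measurable_fun (D : set LR) f.
Proof. by []. Qed.

Lemma mconv' (D : set R) (f : R -> R) :
  measurable_fun (D : set LR) f -> measurable_fun D f.
Proof. by []. Qed.

Lemma Lp_pow_int {p T f} : inLp p T f ->
  mu.-integrable (Itv T) (EFin \o (fun t => `|f t| `^ p)).
Proof.
move=> [/mconv mf fi]; apply/integrableP; split.
  apply/measurable_EFinP; apply: measurableT_comp (measurable_powR p) _.
  exact: measurableT_comp.
by under eq_integral do rewrite /= ger0_norm ?powR_ge0//.
Qed.

Lemma Lp_int {p T f} : 1 <= p -> inLp p T f -> mu.-integrable (Itv T) (EFin \o f).
Proof.
move=> p1 Lf; have ip := Lp_pow_int Lf; case: Lf => /mconv mf _.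
apply: (@le_integrable _ _ _ mu _ (mItv T) _ (EFin \o (fun t => 1 + `|f t| `^ p))).
- exact/measurable_EFinP.
- move=> t _ /=; rewrite lee_fin [X in _ <= X]ger0_norm.
    exact: le_1powR.
  by rewrite addr_ge0// powR_ge0.
- have := integrableD (mItv T) (cst_int 0 T 1) ip.
  apply: eq_integrable; first exact: mItv.
  by move=> t _.
Qed.


Lemma measurable_inv : measurable_fun [set: R] (fun y : R => y^-1).
Proof.
rewrite -(setUv [set (0:R)]); apply/measurable_funU => //.
  exact: measurableC.
split; first exact: measurable_fun_set1.
apply: open_continuous_measurable_fun.
  by rewrite openC; exact/accessible_closed_set1/hausdorff_accessible/Rhausdorff.
move=> y; rewrite inE /= => /eqP y0.
exact: inv_continuous.
Qed.

Lemma wc_meas (a b : R) (f : R -> R) :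
  {within `[a, b], continuous f} -> measurable_fun (`[a, b] : set LR) f.
Proof.
move=> cf; exact: subspace_continuous_measurable_fun.
Qed.

Lemma ae_le_Rint (D N : set LR) (f1 f2 : R -> R) :
  measurable D -> measurable N -> mu N = 0%E ->
  mu.-integrable D (EFin \o f1) -> mu.-integrable D (EFin \o f2) ->
  (forall x, D x -> ~ N x -> f1 x <= f2 x) ->
  Rintegral mu D f1 <= Rintegral mu D f2.
Proof.
move=> mD mN N0 i1 i2 le12.
rewrite /Rintegral (negligible_integral mN mD i1 N0) (negligible_integral mN mD i2 N0).
have mDN : measurable (D `\` N) by exact: measurableD.
apply: (@le_Rintegral _ _ R mu) => //.
- exact: integrableS i1.
- exact: integrableS i2.
- by move=> x [Dx Nx]; exact: le12.
Qed.


Lemma inv_homo {Phi Phiinv : R -> R} : {homo Phi : a b / a < b} ->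
  cancel Phiinv Phi -> {homo Phiinv : a b / a <= b}.
Proof.
move=> hP cK a b ab; rewrite leNgt; apply/negP => ba.
have := hP _ _ ba; rewrite !cK => /(le_lt_trans ab); by rewrite ltxx.
Qed.

Lemma inv_shomo {Phi Phiinv : R -> R} : {homo Phi : a b / a < b} ->
  cancel Phiinv Phi -> {homo Phiinv : a b / a < b}.
Proof.
move=> hP cK a b ab; rewrite lt_neqAle (inv_homo hP cK _ _ (ltW ab)) andbT.
apply/negP => /eqP e; move: ab; by rewrite -(cK a) -(cK b) e ltxx.
Qed.

Lemma inv_bnd {Phi Phiinv : R -> R} (y r : R) : {homo Phi : a b / a < b} ->
  cancel Phiinv Phi -> `|y| <= r ->
  `|Phiinv y| <= `|Phiinv r| + `|Phiinv (- r)|.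
Proof.
move=> hP cK; rewrite ler_norml => /andP[h1 h2].
have m1 := inv_homo hP cK _ _ h1; have m2 := inv_homo hP cK _ _ h2.
have n1 := ler_norm (Phiinv r); have n2 := ler_norm (- Phiinv (- r)).
rewrite normrN in n2; have n3 := normr_ge0 (Phiinv r); have n4 := normr_ge0 (Phiinv (-r)).
rewrite ler_norml; apply/andP; split; lra.
Qed.

Lemma Rint_sub (D E : set LR) (f : R -> R) : measurable D -> measurable E ->
  D `<=` E -> mu.-integrable E (EFin \o f) -> (forall x, E x -> 0 <= f x) ->
  Rintegral mu D f <= Rintegral mu E f.
Proof.
move=> mD mE DE iE f0; have iD := integrableS mE mD DE iE.
rewrite /Rintegral fine_le//; [exact: integrable_fin_num|exact: integrable_fin_num|].
apply: ge0_subset_integral => //; first by case/integrableP: iE.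
Qed.


Lemma memI (T t : R) : (t \in Itv T) = (0 <= t <= T).
Proof. by apply/idP/idP => [/set_mem|h]; [rewrite /Itv /= in_itv|apply/mem_set; rewrite /Itv /= in_itv]. Qed.

Lemma memI' (T t : R) : Itv T t = (0 <= t <= T).
Proof. by rewrite /Itv /= in_itv. Qed.

Lemma sub0t {T t : R} : t \in Itv T -> (`[0, t] : set LR) `<=` Itv T.
Proof.
rewrite memI => /andP[t0 tT] z; rewrite /Itv /= !in_itv /= => /andP[-> zt].
exact: le_trans zt tT.
Qed.

Lemma calF_bnd (T : R) (f psi : R -> R) :
  mu.-integrable (Itv T) (EFin \o f) -> mu.-integrable (Itv T) (EFin \o psi) ->
  (forall t, t \in Itv T -> 0 <= psi t) ->
  {ae mu, forall t, Itv T t -> `|f t| <= psi t} ->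
  forall t, t \in Itv T -> `|Rintegral mu `[0, t] f| <= Rintegral mu (Itv T) psi.
Proof.
move=> fi pi p0 [N [mN N0 sub]] t tI.
have st := sub0t tI.
have m0t : measurable (`[0, t] : set LR) by exact: mcc.
have fi' := integrableS (mItv T) m0t st fi.
have pi' := integrableS (mItv T) m0t st pi.
apply: le_trans (le_normr_Rintegral m0t fi') _.
apply: (@le_trans _ _ (Rintegral mu `[0, t] psi)).
  have := @ae_le_Rint _ _ (fun z => `|f z|) psi m0t mN N0 (integrable_norm fi') pi'.
  apply. 
  move=> z zt Nz; apply: contrapT => nle; apply: Nz; apply: sub => /= h.
  by apply: nle; apply: h; apply: st.
apply: Rint_sub => //; first exact: mItv.
by move=> z zI; apply: p0; rewrite inE.
Qed.


Lemma pint_cont (T : R) (f : R -> R) : 0 <= T ->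
  mu.-integrable (Itv T) (EFin \o f) ->
  {within Itv T, continuous (fun t => Rintegral mu `[0, t] f)}.
Proof.
move=> T0 fi; exact: (@parameterized_integral_continuous R 0 T f T0 fi).
Qed.

Lemma Q_cont (T c : R) (f Phiinv : R -> R) : 0 <= T -> continuous Phiinv ->
  mu.-integrable (Itv T) (EFin \o f) ->
  {within Itv T, continuous (fun t => Phiinv (c + Rintegral mu `[0, t] f))}.
Proof.
move=> T0 cP fi.
have cQ : {within Itv T, continuous (fun t => c + Rintegral mu `[0, t] f)}.
  apply: (@within_continuousD _ R R (Itv T) (cst c) (fun t => Rintegral mu `[0, t] f)).
    move=> z; exact: cst_continuous.
  exact: pint_cont.
move=> z; apply: continuous_comp (cQ z) _; exact: cP.
Qed.

Lemma fc_meas (T c : R) (a f Phiinv : R -> R) : 0 <= T -> continuous Phiinv ->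
  {within Itv T, continuous a} -> mu.-integrable (Itv T) (EFin \o f) ->
  measurable_fun (Itv T : set LR)
    (fun t => (a t)^-1 * Phiinv (c + Rintegral mu `[0, t] f)).
Proof.
move=> T0 cP ca fi.
apply: (@measurable_funM _ LR R (Itv T) (fun t => (a t)^-1)
   (fun t => Phiinv (c + Rintegral mu `[0, t] f))).
  apply: (measurableT_comp measurable_inv); exact: wc_meas.
apply: wc_meas; exact: Q_cont.
Qed.


Lemma ae_int (D N : set LR) (K0 : R) (g hi : R -> R) :
  measurable D -> measurable N -> mu N = 0%E ->
  measurable_fun D g -> mu.-integrable D (EFin \o hi) ->
  (forall t, D t -> ~ N t -> `|g t| <= K0 * `|hi t|) ->
  mu.-integrable D (EFin \o g).
Proof.
move=> mD mN N0 mg hint bnd.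
have mg' : measurable_fun D (EFin \o g) by exact/measurable_EFinP.
rewrite (negligible_integrable mN mD mg' N0).
have mDN : measurable (D `\` N) by exact: measurableD.
have bi : mu.-integrable D (EFin \o (fun t => K0 * `|hi t|)).
  have := integrableZl mD K0 (integrable_norm hint).
  by apply: eq_integrable => // t _ /=; rewrite EFinM.
apply: (@le_integrable _ _ _ mu _ mDN _ (EFin \o (fun t => K0 * `|hi t|))).
- exact: measurable_funS mg'.
- move=> t [Dt Nt] /=; rewrite lee_fin.
  apply: le_trans (bnd t Dt Nt) _; exact: ler_norm.
- exact: integrableS bi.
Qed.


Lemma muI (T : R) : 0 <= T -> fine (mu (Itv T : set LR)) = T.
Proof.
move=> T0; have := lebesgue_measure_itv `[0, T]%R; rewrite /Itv /= => ->.
by case: ifPn => /=; rewrite ?subr0// lte_fin -leNgt => h; apply/eqP; rewrite eq_le T0 h.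
Qed.

Lemma sol_bnd (T H M k c nu : R) (a f Phi Phiinv hi : R -> R) (N : set LR) :
  0 < T -> 0 < H -> 0 < k -> measurable N -> mu N = 0%E ->
  {homo Phi : a b / a < b} -> cancel Phi Phiinv -> cancel Phiinv Phi ->
  continuous Phiinv ->
  {within Itv T, continuous a} -> mu.-integrable (Itv T) (EFin \o f) ->
  mu.-integrable (Itv T) (EFin \o hi) ->
  (forall t, Itv T t -> ~ N t -> 0 < a t <= H /\ (a t)^-1 <= `|hi t|) ->
  (forall t, t \in Itv T -> `|Rintegral mu `[0, t] f| <= M) ->
  `|nu| < k * T / H ->
  Rintegral mu (Itv T) (fun t => (a t)^-1 * Phiinv (c + Rintegral mu `[0, t] f)) = nu ->
  `|c| <= `|Phi k| + `|Phi (- k)| + M.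
Proof.
move=> T0 H0 k0 mN N0 hP cK1 cK2 cP ca fi hint ha fM nuk eq.
have mI := mItv T.
set fc := (fun t => (a t)^-1 * Phiinv (c + Rintegral mu `[0, t] f)).
pose Kc := `|Phiinv (`|c| + M)| + `|Phiinv (- (`|c| + M))|.
have fci : mu.-integrable (Itv T) (EFin \o fc).
  apply: (ae_int (Itv T) N Kc fc hi mI mN N0) => //.
    exact: fc_meas (ltW T0) cP ca fi.
  move=> t It Nt; have [/andP[a0 aH] ah] := ha t It Nt.
  rewrite /fc normrM mulrC ler_pM//.
    rewrite /Kc; apply: (inv_bnd _ _ hP cK2); apply: (le_trans (ler_normD _ _)); rewrite lerD2l.
    by apply: fM; rewrite memI -memI'.
  by rewrite normrV ?unitfE ?gt_eqF// gtr0_norm.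
have cstI (r : R) : Rintegral mu (Itv T) (fun=> r) = r * T.
  by rewrite Rintegral_cst// muI// ltW.
have cI (r : R) : mu.-integrable (Itv T) (EFin \o cst r) by exact: cst_int.
rewrite leNgt; apply/negP => hc.
have [c0|c0] := leP 0 c.
- have hc' : Phi k + M < c.
    rewrite (ger0_norm c0) in hc.
    have := ler_norm (Phi k); have := normr_ge0 (Phi (- k)); lra.
  have : Rintegral mu (Itv T) (fun=> k / H) <= nu.
    rewrite -eq; have := ae_le_Rint (Itv T) N (cst (k / H)) fc mI mN N0 (cI (k / H)) fci; apply.
    move=> t It Nt; have [/andP[a0 aH] ah] := ha t It Nt.
    have hk : k < Phiinv (c + Rintegral mu `[0, t] f).
      rewrite -{1}(cK1 k); apply: (inv_shomo hP cK2).
      have := fM t; rewrite memI -memI' => /(_ It); rewrite ler_norml => /andP[h1 h2].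
      lra.
    rewrite /cst mulrC; apply: ler_pM.
    - by rewrite invr_ge0 ltW.
    - exact: ltW.
    - by rewrite lef_pV2 ?posrE.
    - exact: ltW.
  rewrite cstI; move: nuk; rewrite ltr_norml => /andP[_ h] h'.
  have : k / H * T = k * T / H by rewrite mulrAC.
  lra.
- have hc' : c < Phi (- k) - M.
    rewrite (ltr0_norm c0) in hc.
    have := ler_norm (- Phi (-k)); rewrite normrN => hh.
    have := normr_ge0 (Phi k); lra.
  have : nu <= Rintegral mu (Itv T) (fun=> - (k / H)).
    rewrite -eq; have := ae_le_Rint (Itv T) N fc (cst (- (k / H))) mI mN N0 fci (cI (- (k / H))); apply.
    move=> t It Nt; have [/andP[a0 aH] ah] := ha t It Nt.
    have hk : Phiinv (c + Rintegral mu `[0, t] f) < - k.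
      rewrite -{1}(cK1 (- k)); apply: (inv_shomo hP cK2).
      have := fM t; rewrite memI -memI' => /(_ It); rewrite ler_norml => /andP[h1 h2].
      lra.
    have hh : H^-1 * k <= (a t)^-1 * (- Phiinv (c + Rintegral mu `[0, t] f)).
      apply: ler_pM.
      - by rewrite invr_ge0 ltW.
      - exact: ltW.
      - by rewrite lef_pV2 ?posrE.
      - lra.
    rewrite mulrN in hh; rewrite /cst /fc (mulrC k); lra.
  rewrite cstI; move: nuk; rewrite ltr_norml => /andP[h _] h'.
  have : - (k / H) * T = - (k * T / H) by rewrite mulNr mulrAC.
  lra.
Qed.


Lemma wd_unique (T : R) (u v : R -> R) : 0 <= T ->
  mu.-integrable (Itv T) (EFin \o u) -> mu.-integrable (Itv T) (EFin \o v) ->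
  (forall t, t \in Itv T -> Rintegral mu `[0, t] u = Rintegral mu `[0, t] v) ->
  {ae mu, forall t, Itv T t -> u t = v t}.
Proof.
move=> T0 ui vi huv.
have mI := mItv T.
pose w := fun t => u t - v t.
have wi : mu.-integrable (Itv T) (EFin \o w).
  by have := integrableB mI ui vi; apply: eq_integrable.
pose d := w \_ (Itv T).
have dT : mu.-integrable setT (EFin \o d).
  have := (integrable_mkcond _ mI).1 wi.
  by apply: eq_integrable => // t _; rewrite /d restrict_EFin.
have dint : forall y, mu.-integrable [set` Interval (BLeft 0) (BRight y)] (EFin \o d).
  move=> y; apply: integrableS dT => //; exact: measurable_itv.
have dloc : locally_integrable [set: R] d by exact: integrable_locally.
have := FTC1 dint dloc.
set F := (fun x => _) => hF.
have F0 : F = cst 0.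
  apply/funext => x; rewrite /F /=.
  have [x0|x0] := ltP x 0.
    by rewrite set_itv_ge ?Rintegral_set0// bnd_simp -ltNge.
  rewrite /d -Rintegral_mkcondr.
  have [m [mI' ->]] : exists m, m \in Itv T /\ `[0, x] `&` Itv T = `[0, m]%classic.
    have [xT|xT] := leP x T.
      exists x; split; first by rewrite memI x0.
      by rewrite setIidl//; apply: sub0t; rewrite memI x0.
    exists T; split; first by rewrite memI T0 lexx.
    rewrite setIidr//; apply: subset_itvl; rewrite bnd_simp; exact: ltW.
  have s0m := sub0t mI'.
  have m0m : measurable (`[0, m] : set LR) by exact: mcc.
  rewrite /w RintegralB//; first by rewrite huv// subrr.
    exact: integrableS ui.
  exact: integrableS vi.
have h0 : \forall t \ae mu, t != 0.
  exists [set 0]; split => //; first exact: lebesgue_measure_set1.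
  by move=> t /= /negP; rewrite negbK => /eqP.
move: h0 hF; apply: filterS2; first exact: (ae_filter_ringOfSetsType mu).
move=> t t0 ht It.
have : (0 < t)%R by rewrite lt_neqAle eq_sym t0; move: It; rewrite memI' => /andP[].
rewrite -lte_fin => /ht [_].
rewrite F0 derive1_cst /d patchE mem_set// => /esym /eqP.
by rewrite /w subr_eq0 => /eqP.
Qed.


Lemma powR_le (r x y : R) : 0 <= r -> 0 <= x -> x <= y -> x `^ r <= y `^ r.
Proof.
move=> r0 x0 xy; apply: (ge0_ler_powR r0) => //; rewrite nnegrE//.
exact: le_trans xy.
Qed.

End S.

Theorem lemma2p7 (R : realType) (T nu1 nu2 p : R) (Phi Phiinv : R -> R)
    (A F : (R -> R) -> R -> R) (h1 h2 psi : R -> R) :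
  0 < T -> 1 < p ->
  (* Phi : R -> R strictly increasing homeomorphism with inverse Phiinv *)
  {homo Phi : a b / a < b} -> continuous Phi -> continuous Phiinv ->
  cancel Phi Phiinv -> cancel Phiinv Phi ->
  (* A : W^{1,p}(I) -> C(I), continuous for the uniform topology *)
  (forall x, inW1p p T x -> {within Itv T, continuous (A x)}) ->
  (forall x, inW1p p T x -> forall e : R, 0 < e -> exists2 d : R, 0 < d &
     forall y, inW1p p T y -> W1pnorm p T (y \- x) < d ->
       forall t, t \in Itv T -> `|A y t - A x t| < e) ->
  {within Itv T, continuous h1} -> {within Itv T, continuous h2} ->
  (forall t, t \in Itv T -> 0 <= h1 t) -> (forall t, t \in Itv T -> 0 <= h2 t) ->
  inv_inLp p T h1 -> inv_inLp p T h2 ->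
  (forall x, inW1p p T x -> forall t, t \in Itv T -> h1 t <= A x t <= h2 t) ->
  (* F : W^{1,p}(I) -> L^1(I), continuous *)
  (forall x, inW1p p T x -> inL1 T (F x)) ->
  (forall x, inW1p p T x -> forall e : R, 0 < e -> exists2 d : R, 0 < d &
     forall y, inW1p p T y -> W1pnorm p T (y \- x) < d ->
       Rintegral lebesgue_measure (Itv T) (fun t => `|F y t - F x t|) < e) ->
  (* domination by a non-negative psi in L^1(I) *)
  (forall t, t \in Itv T -> 0 <= psi t) -> inL1 T psi ->
  (forall x, inW1p p T x ->
     {ae lebesgue_measure, forall t, Itv T t -> `|F x t| <= psi t}) ->
  exists2 c1 : R, 0 < c1 &
    forall x, inW1p p T x -> W1pnorm p T (calP T nu1 nu2 Phiinv A F x) <= c1.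
Proof.
move=> T0 p1 hP cPhi cPhiinv cK1 cK2 Acont Acont2 h1c h2c h10 h20 [N10 h1L] [N20 h2L]
  hA Fi Fcont psi0 psii Fpsi.
have mI := mItv T.
pose N : set (measurableTypeR R) := Itv T `&` [set t | h1 t = 0].
have mN : measurable N.
  case: h1L => mh1 _.
  have := mh1 (mItv T) [set 0] (measurable_set1 0).
  rewrite (_ : (fun t => (h1 t)^-1) @^-1` [set 0] = [set t | h1 t = 0]) //.
  by apply/seteqP; split => t /=; [move/eqP; rewrite invr_eq0 => /eqP|move=> ->; rewrite invr0].
have N0 : lebesgue_measure N = 0%E by exact: N10.
pose hi := fun t => (h1 t)^-1.
have hii : lebesgue_measure.-integrable (Itv T) (EFin \o hi) := Lp_int (ltW p1) h1L.
have [c0 c0I c0max] := EVT_max (ltW T0) h2c.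
pose H := h2 c0 + 1.
have c0I' : c0 \in Itv T by rewrite memI; move: c0I; rewrite in_itv.
have H0 : 0 < H by rewrite /H ltr_pwDr// h20.
pose M := Rintegral lebesgue_measure (Itv T) psi.
pose k := H * (`|nu2 - nu1| + 1) / T.
have k0 : 0 < k by rewrite /k divr_gt0// mulr_gt0// ltr_pwDr.
have nuk : `|nu2 - nu1| < k * T / H.
  have -> : k * T / H = `|nu2 - nu1| + 1.
    by rewrite /k; field; rewrite ?gt_eqF//; apply/andP; split; rewrite gt_eqF.
  lra.
pose Xi := `|Phi k| + `|Phi (- k)| + M.
pose K := `|Phiinv (Xi + M)| + `|Phiinv (- (Xi + M))|.
pose C1 := Rintegral lebesgue_measure (Itv T) (fun t => `|hi t| `^ p).
pose Dp := K `^ p * C1.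
pose B := `|nu1| + T + Dp.
exists ((B `^ p * T) `^ p^-1 + Dp `^ p^-1 + 1).
  by rewrite ltr_pwDr// addr_ge0// powR_ge0.
move=> x xW.
have Fxi := Fi x xW.
have fM : forall t, t \in Itv T -> `|calF F x t| <= M.
  exact: calF_bnd Fxi psii psi0 (Fpsi x xW).
have ha : forall t, Itv T t -> ~ N t -> 0 < A x t <= H /\ (A x t)^-1 <= `|hi t|.
  move=> t It Nt; have tI : t \in Itv T by rewrite memI -memI'.
  have /andP[l1 l2] := hA x xW t tI.
  have h1p : 0 < h1 t.
    rewrite lt_neqAle h10// andbT eq_sym; apply/eqP => e; apply: Nt; split => //.
  have a0 : 0 < A x t := lt_le_trans h1p l1.
  split.
    rewrite a0 /=; apply: (le_trans l2); apply: (le_trans (c0max _ _)).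
      by move: tI; rewrite memI in_itv.
    by rewrite /H lerDl.
  by rewrite /hi gtr0_norm ?invr_gt0// lef_pV2 ?posrE.
pose xi0 := xi T nu1 nu2 Phiinv A F x.
have xib : `|xi0| <= Xi.
  have Xi0 : 0 <= Xi.
    by rewrite /Xi addr_ge0// ?addr_ge0// /M Rintegral_ge0// => t It; apply: psi0; rewrite memI -memI'.
  rewrite /xi0 /xi.
  set P := (X in xget 0 X).
  have [[c Pc]|nP] := pselect (exists c, P c); last first.
    by rewrite xgetPN ?normr0// => c Pc; apply: nP; exists c.
  have := xgetPex 0 (ex_intro _ c Pc); set c' := xget 0 P => Pc'.
  apply: (sol_bnd _ _ _ _ _ _ _ _ _ _ _ _ T0 H0 k0 mN N0 hP cK1 cK2 cPhiinv (Acont x xW) Fxi hii ha fM nuk Pc').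
pose g := fun s => (A x s)^-1 * Phiinv (xi0 + calF F x s).
have gK : forall t, t \in Itv T -> `|Phiinv (xi0 + calF F x t)| <= K.
  move=> t tI; apply: (inv_bnd _ _ hP cK2).
  by apply: (le_trans (ler_normD _ _)); apply: lerD => //; exact: fM.
have gmeas : measurable_fun (Itv T : set (measurableTypeR R)) g.
  exact: fc_meas (ltW T0) cPhiinv (Acont x xW) Fxi.
have gbnd : forall t, Itv T t -> ~ N t -> `|g t| <= K * `|hi t|.
  move=> t It Nt; have [/andP[a0 _] ah] := ha t It Nt.
  rewrite /g normrM mulrC ler_pM//; first by apply: gK; rewrite memI -memI'.
  by rewrite normrV ?unitfE ?gt_eqF// gtr0_norm.
have gint : lebesgue_measure.-integrable (Itv T) (EFin \o g).
  exact: (ae_int (Itv T) N K g hi mI mN N0 gmeas hii gbnd).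
have K0 : 0 <= K by rewrite /K addr_ge0.
have p0 : 0 <= p by lra.
have hpi := Lp_pow_int h1L.
have bint : lebesgue_measure.-integrable (Itv T)
    (EFin \o (fun t => K `^ p * `|hi t| `^ p)).
  by have := integrableZl mI (K `^ p) hpi; apply: eq_integrable.
have gpow : forall t, Itv T t -> ~ N t -> `|g t| `^ p <= K `^ p * `|hi t| `^ p.
  move=> t It Nt; rewrite -powRM//; apply: powR_le => //; exact: gbnd.
have gLp : inLp p T g.
  split; first exact: gmeas.
  apply: le_lt_trans (integrable_lty mI bint).
  apply: ae_ge0_le_integral => //.
  - apply/measurable_EFinP; apply: measurableT_comp (measurable_powR p) _.
    exact: measurableT_comp.
  - by move=> t _; rewrite lee_fin mulr_ge0// powR_ge0.
  - by case/integrableP: bint.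
  - exists N; split => // t /= h; apply: contrapT => Nt; apply: h => It.
    by rewrite lee_fin; exact: gpow.
have gDp : Rintegral lebesgue_measure (Itv T) (fun t => `|g t| `^ p) <= Dp.
  have := ae_le_Rint (Itv T) N (fun t => `|g t| `^ p) (fun t => K `^ p * `|hi t| `^ p)
    mI mN N0 (Lp_pow_int gLp) bint gpow.
  by rewrite RintegralZl.
have cstI (r : R) : Rintegral lebesgue_measure (Itv T) (fun=> r) = r * T.
  by rewrite Rintegral_cst// muI// ltW.
have gp1 : lebesgue_measure.-integrable (Itv T) (EFin \o (fun t => 1 + `|g t| `^ p)).
  by have := integrableD mI (cst_int 0 T 1) (Lp_pow_int gLp); apply: eq_integrable.
have gabs : Rintegral lebesgue_measure (Itv T) (fun t => `|g t|) <= T + Dp.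
  apply: (@le_trans _ _ (Rintegral lebesgue_measure (Itv T) (fun t => 1 + `|g t| `^ p))).
    apply: le_Rintegral => //; first exact: integrable_norm.
    by move=> t _; apply: le_1powR => //; lra.
  rewrite RintegralD//; last exact: Lp_pow_int.
    by rewrite cstI mul1r lerD2l.
  exact: cst_int.
pose P := calP T nu1 nu2 Phiinv A F x.
have PE : forall t, P t = nu1 + Rintegral lebesgue_measure `[0, t] g by [].
have Pb : forall t, t \in Itv T -> `|P t| <= B.
  move=> t tI; rewrite PE; apply: (le_trans (ler_normD _ _)).
  rewrite /B -addrA lerD2l; apply: le_trans gabs.
  have m0t := mcc 0 t; have s0t := sub0t tI.
  apply: le_trans (le_normr_Rintegral m0t (integrableS mI m0t s0t gint)) _.
  apply: Rint_sub => //; first exact: integrable_norm.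
have Pmeas : measurable_fun (Itv T : set (measurableTypeR R)) P.
  apply: wc_meas.
  apply: (@within_continuousD _ R R (Itv T) (cst nu1) (fun t => Rintegral lebesgue_measure `[0, t] g)).
    move=> z; exact: cst_continuous.
  exact: pint_cont (ltW T0) gint.
have PLp : inLp p T P.
  split; first exact: Pmeas.
  apply: le_lt_trans (integrable_lty mI (cst_int 0 T (B `^ p))).
  have f10 : forall t, Itv T t -> (0 <= (`|P t| `^ p)%:E)%E.
    by move=> t _; rewrite lee_fin powR_ge0.
  have mf1 : measurable_fun (Itv T : set (measurableTypeR R)) (fun t => (`|P t| `^ p)%:E).
    apply/measurable_EFinP; apply: measurableT_comp (measurable_powR p) _.
    exact: measurableT_comp.
  have mf2 : measurable_fun (Itv T : set (measurableTypeR R)) (EFin \o cst (B `^ p)).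
    by case/integrableP: (cst_int 0 T (B `^ p)).
  have := @ge0_le_integral _ _ R lebesgue_measure (Itv T) mI _ _ f10 mf1 mf2.
  apply => t It; rewrite /= lee_fin; apply: powR_le => //.
  by apply: Pb; rewrite memI -memI'.
have PT : Rintegral lebesgue_measure (Itv T) (fun t => `|P t| `^ p) <= B `^ p * T.
  rewrite -cstI; apply: le_Rintegral => //; first exact: Lp_pow_int.
    exact: cst_int.
  move=> t It; apply: powR_le => //.
  by apply: Pb; rewrite memI -memI'.
have P0 : P 0 = nu1.
  by rewrite PE set_itv1 Rintegral_set1 addr0.
have wdg : weak_deriv p T P g.
  split => //; split => // t tI; by rewrite P0.
pose g2 := wderiv p T P.
have wd2 : weak_deriv p T P g2 by exact: (xgetPex _ (ex_intro _ g wdg)).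
case: wd2 => _ [g2Lp g2E].
have g2int := Lp_int (ltW p1) g2Lp.
have aeg : {ae lebesgue_measure, forall t, Itv T t -> g2 t = g t}.
  apply: (wd_unique _ _ _ (ltW T0) g2int gint) => t tI.
  have := g2E t tI; rewrite P0 PE => /(congr1 (fun z => z - nu1)) /=; rewrite ![nu1 + _]addrC !addrK => ->.
  done.
have eqn : Rintegral lebesgue_measure (Itv T) (fun t => `|g2 t| `^ p) =
           Rintegral lebesgue_measure (Itv T) (fun t => `|g t| `^ p).
  congr fine; apply: ae_eq_integral => //.
  - by case/integrableP: (Lp_pow_int g2Lp).
  - by case/integrableP: (Lp_pow_int gLp).
  - move: aeg; apply: filterS; first exact: (ae_filter_ringOfSetsType lebesgue_measure).
    by move=> t h It; rewrite h.
rewrite /W1pnorm -/g2 /Lpnorm eqn.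
have ip : 0 <= p^-1 by rewrite invr_ge0.
apply: (@le_trans _ _ ((B `^ p * T) `^ p^-1 + Dp `^ p^-1)); last by rewrite lerDl.
apply: lerD; apply: powR_le => //.
- by apply: Rintegral_ge0 => t _; rewrite powR_ge0.
- by apply: Rintegral_ge0 => t _; rewrite powR_ge0.
Qed.
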